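(* Let $(X,\mathbf h,\Lambda,\widetilde B)$ be a quantum seed, $i\neq j\in[1,n]$, and let $\mathbb L_0^{\vee\vee}=\mathbb{ZP}[X_k^{\pm1}\mid k\in[1,n]\setminus\{i,j\}]$. Let $f_1,f_2\in\bigoplus_{k\in[1,m]\setminus\{i,j\}}\mathbb Z e_k$ satisfy $\Lambda(f_1,e_k)=\Lambda(f_2,e_k)=0$ for all $k\in[1,m]\setminus\{i,j\}$. Let $N,N_1$ be positive integers and $$V_1=\prod_{l=1}^{N}\Big(\sum_{r=0}^{s_l}\xi_{l,r}X(rf_1)\Big),\qquad V_2=\prod_{l=1}^{N_1}\Big(\sum_{r=0}^{t_l}\zeta_{l,r}X(rf_2)\Big),$$ with $s_l,t_l\ge0$, coefficients $\xi_{l,r},\zeta_{l,r}\in\mathbb Z[q^{\pm1/2}]$, and $\xi_{l,s_l}=\zeta_{l,t_l}=1$ for all $l$. If $f_1$ and $f_2$ are $\mathbb Z$-linearly independent, then $V_1$ and $V_2$ are coprime in the center of $\mathbb L_0^{\vee\vee}$ (i.e. they have no common non-invertible divisor in that commutative ring).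
   Context: Notation: $[a,b]=\{a,a+1,\dots,b\}$; $[x]_+=\max(x,0)$, applied entrywise to vectors; $e_1,\dots,e_m$ is the standard basis of $\mathbb Z^m$. Fix integers $m\ge n\ge 1$. A compatible pair $(\Lambda,\widetilde B)$ consists of an $m\times n$ integer matrix $\widetilde B=(b_{kl})$ and a skew-symmetric $m\times m$ integer matrix $\Lambda=(\lambda_{kl})$ such that $\Lambda\widetilde B=-\begin{bmatrix}D\\0\end{bmatrix}$ for some $D=\mathrm{diag}(\tilde d_1,\dots,\tilde d_n)$ with all $\tilde d_k\in\mathbb Z_{>0}$. Write $\Lambda(a,b)=a^T\Lambda b$. Fix positive integers $d_1,\dots,d_n$ such that $d_k$ divides every entry of the $k$-th column $b^k$ of $\widetilde B$; $\beta^k=\frac1{d_k}b^k$. The quantum torus $\mathcal T(\Lambda)$ is the $\mathbb Z[q^{\pm1/2}]$-algebra with basis $\{X(c)\mid c\in\mathbb Z^m\}$ and multiplication $X(c)X(d)=q^{\frac12\Lambda(c,d)}X(c+d)$; $\mathcal F$ is its skew field of fractions, and $X_k=X(e_k)$. For each $k\in[1,n]$, $\mathbf h_k=(h_{k,0},\dots,h_{k,d_k})$ with $h_{k,r}\in\mathbb Z[q^{\pm1/2}]$, $h_{k,r}=h_{k,d_k-r}$, $h_{k,0}=h_{k,d_k}=1$; $\mathbf h=(\mathbf h_1,\dots,\mathbf h_n)$. A quantum seed $(X,\mathbf h,\Lambda,\widetilde B)$ consists of these data with $X$ the map $c\mapsto X(c)$. $\mathbb{ZP}$ is the ring of Laurent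 polynomials in $X_{n+1},\dots,X_m$ with coefficients in $\mathbb Z[q^{\pm1/2}]$; for $Y_1,\dots,Y_s\in\mathcal F$, $\mathbb{ZP}[Y_1,\dots,Y_s]$ is the subring of $\mathcal F$ generated by $\mathbb{ZP}$ and the $Y_k$ (exponent $\pm1$ means both $Y$ and $Y^{-1}$ are adjoined). *)

(* Defs.v *)
From HB Require Import structures.
From mathcomp Require Import all_boot all_order all_algebra.
From mathcomp Require Import finmap.
From mathcomp Require Import monalg.
Set Implicit Arguments. Unset Strict Implicit. Unset Printing Implicit Defensive.
Import Order.TTheory GRing.Theory Num.Theory.
Local Open Scope ring_scope.

(* Z[q^{1/2}, q^{-1/2}] : finitely supported int -> int; key a stands for q^{a/2}. *)
Definition ZQ := {malg int[int]}.
Definition zq1 : ZQ := << (0%R : int) >>.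

(* The quantum torus T(Lambda) for an m x m matrix Lambda, as a free Z-module
   with basis q^{a/2} X(c), (a, c) in Z x Z^m.  Key (a, c) = q^{a/2} X(c). *)
Definition qtorus (m : nat) := {malg int[(int * 'rV[int]_m)%type]}.

Definition lam m (L : 'M[int]_m) (a b : 'rV[int]_m) : int := (a *m L *m b^T) 0 0.

Definition tmul m (L : 'M[int]_m) (g h : qtorus m) : qtorus m :=
  \sum_(u <- msupp g) \sum_(v <- msupp h)
     << (g@_u * h@_v) *g (u.1 + v.1 + lam L u.2 v.2, u.2 + v.2) >>.

Definition tone m : qtorus m := << ((0%R : int), (0 : 'rV[int]_m)) >>.

Definition Xt m (c : 'rV[int]_m) : qtorus m := << ((0%R : int), c) >>.

Definition sc m (p : ZQ) : qtorus m :=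
  \sum_(a <- msupp p) << p@_a *g (a, (0 : 'rV[int]_m)) >>.

Definition ev m (k : 'I_m) : 'rV[int]_m := delta_mx 0 k.

(* The subring  L0vv = ZP[X_k^{+-1} | k in [1,n] \ {i,j}]  of T(Lambda)
   (hence of F): the subring generated by Z[q^{+-1/2}], X_k^{+-1} for the frozen
   indices k >= n (0-based), and X_k^{+-1} for k < n, k <> i, j.
   (X_k^{-1} = X(-e_k) in T(Lambda).) *)
Inductive inL0 m (L : 'M[int]_m) (n i j : nat) : qtorus m -> Prop :=
| inL0_sc : forall p, inL0 L n i j (sc m p)
| inL0_frozen : forall k : 'I_m, (n <= k)%N -> inL0 L n i j (Xt (ev k))
| inL0_frozen_inv : forall k : 'I_m, (n <= k)%N -> inL0 L n i j (Xt (- ev k))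
| inL0_mut : forall k : 'I_m, (k < n)%N -> (val k != i) -> (val k != j) ->
    inL0 L n i j (Xt (ev k))
| inL0_mut_inv : forall k : 'I_m, (k < n)%N -> (val k != i) -> (val k != j) ->
    inL0 L n i j (Xt (- ev k))
| inL0_add : forall x y, inL0 L n i j x -> inL0 L n i j y -> inL0 L n i j (x + y)
| inL0_opp : forall x, inL0 L n i j x -> inL0 L n i j (- x)
| inL0_mul : forall x y, inL0 L n i j x -> inL0 L n i j y ->
    inL0 L n i j (tmul L x y).

Definition inCenterL0 m (L : 'M[int]_m) (n i j : nat) (z : qtorus m) : Prop :=
  inL0 L n i j z /\ forall y, inL0 L n i j y -> tmul L z y = tmul L y z.

Definition coprime_in_center m (L : 'M[int]_m) (n i j : nat) (x y : qtorus m) : Prop :=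
  forall d, inCenterL0 L n i j d ->
    (exists a, inCenterL0 L n i j a /\ x = tmul L d a) ->
    (exists b, inCenterL0 L n i j b /\ y = tmul L d b) ->
    exists e, inCenterL0 L n i j e /\ tmul L d e = tone m.

Definition compatible_pair m n (L : 'M[int]_m) (B : 'M[int]_(m, n)) : Prop :=
  L^T = - L /\
  exists D : 'I_n -> int, (forall l, 0 < D l) /\
    forall (k : 'I_m) (l : 'I_n),
      (L *m B) k l = if val k == val l then - D l else 0.

Definition seed_data m n (L : 'M[int]_m) (B : 'M[int]_(m, n))
  (d : 'I_n -> nat) (h : 'I_n -> seq ZQ) : Prop :=
  (1 <= n)%N /\ (n <= m)%N /\ compatible_pair L B /\
  (forall l, (0 < d l)%N) /\
  (forall (k : 'I_m) (l : 'I_n), ((d l)%:Z %| B k l)%Z) /\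
  (forall l, size (h l) = (d l).+1) /\
  (forall l r, (r <= d l)%N -> nth 0 (h l) r = nth 0 (h l) (d l - r)) /\
  (forall l, nth 0 (h l) 0 = zq1 /\ nth 0 (h l) (d l) = zq1).

(* Main.v *)
Require Import Defs.
From HB Require Import structures.
From mathcomp Require Import all_boot all_order all_algebra.
From mathcomp Require Import finmap.
From mathcomp Require Import monalg.
From mathcomp Require Import zify ring lra.
Set Implicit Arguments. Unset Strict Implicit. Unset Printing Implicit Defensive.
Import Order.TTheory GRing.Theory Num.Theory.
Local Open Scope ring_scope.



Section Torus.
Variable (m : nat) (L : 'M[int]_m).
Local Notation K := (int * 'rV[int]_m)%type.
Local Notation T := (qtorus m).

Definition pk (u v : K) : K := (u.1 + v.1 + lam L u.2 v.2, u.2 + v.2).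

Lemma tmulw (D1 D2 : {fset K}) (g h : T) :
  (msupp g `<=` D1)%fset -> (msupp h `<=` D2)%fset ->
  tmul L g h = \sum_(u <- D1) \sum_(v <- D2) << g@_u * h@_v *g pk u v >>.
Proof.
move=> le1 le2; rewrite /tmul (big_fset_incl _ le1) /=.
  apply/eq_bigr=> k1 _; apply/big_fset_incl => // k _ /mcoeff_outdom ->.
  by rewrite mulr0 monalgU0.
move=> k _ /mcoeff_outdom g1k.
by rewrite big1 => // k' _; rewrite g1k mul0r monalgU0.
Qed.

Lemma tmulUU x y u v : tmul L << x *g u >> << y *g v >> = << x * y *g pk u v >>.
Proof. by rewrite (tmulw msuppU_le msuppU_le) !big_seq_fset1 !mcoeffUU. Qed.

Lemma tmul0g g : tmul L 0 g = 0.
Proof. by rewrite /tmul msupp0 big_seq_fset0. Qed.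
Lemma tmulg0 g : tmul L g 0 = 0.
Proof. by rewrite /tmul msupp0; apply: big1 => u _; rewrite big_seq_fset0. Qed.

Lemma tmulDl g1 g2 h : tmul L (g1 + g2) h = tmul L g1 h + tmul L g2 h.
Proof.
have s1 : (msupp g1 `<=` msupp g1 `|` msupp g2)%fset by apply: fsubsetUl.
have s2 : (msupp g2 `<=` msupp g1 `|` msupp g2)%fset by apply: fsubsetUr.
rewrite (tmulw (msuppD_le g1 g2) (fsubset_refl _)) (tmulw s1 (fsubset_refl _)).
rewrite (tmulw s2 (fsubset_refl _)) -big_split /=; apply: eq_bigr => u _.
rewrite -big_split /=; apply: eq_bigr => v _.
by rewrite mcoeffD mulrDl monalgUD.
Qed.

Lemma tmulE g h w : (tmul L g h)@_w =
  \sum_(u <- msupp g) \sum_(v <- msupp h) (g@_u * h@_v) *+ (pk u v == w).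
Proof.
rewrite /tmul raddf_sum; apply: eq_bigr => u _; rewrite raddf_sum.
apply: eq_bigr => v _ /=. by rewrite mcoeffU.
Qed.
End Torus.

Section Lam.
Variable (m : nat) (L : 'M[int]_m).
Lemma lamDl a b c : lam L (a + b) c = lam L a c + lam L b c.
Proof. by rewrite /lam !mulmxDl mxE. Qed.
Lemma lamDr a b c : lam L a (b + c) = lam L a b + lam L a c.
Proof. by rewrite /lam linearD /= mulmxDr mxE. Qed.
Lemma lam0l c : lam L 0 c = 0.
Proof. by rewrite /lam !mul0mx mxE. Qed.
Lemma lam0r c : lam L c 0 = 0.
Proof. by rewrite /lam trmx0 mulmx0 mxE. Qed.
Lemma lamNl a c : lam L (- a) c = - lam L a c.
Proof. by apply/eqP; rewrite -addr_eq0 -lamDl addNr lam0l. Qed.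
Lemma lamNr a c : lam L c (- a) = - lam L c a.
Proof. by apply/eqP; rewrite -addr_eq0 -lamDr addNr lam0r. Qed.
Lemma lamMnl a c r : lam L (a *+ r) c = lam L a c *+ r.
Proof. by elim: r => [|r IH]; rewrite ?mulr0n ?lam0l // !mulrS lamDl IH. Qed.
Lemma lamMnr a c r : lam L c (a *+ r) = lam L c a *+ r.
Proof. by elim: r => [|r IH]; rewrite ?mulr0n ?lam0r // !mulrS lamDr IH. Qed.
Lemma lamZr (z : int) a c : lam L c (z *: a) = z * lam L c a.
Proof. by rewrite /lam linearZ /= -scalemxAr mxE. Qed.
Lemma lam_suml I (r : seq I) (P : pred I) F c :
  lam L (\sum_(i <- r | P i) F i) c = \sum_(i <- r | P i) lam L (F i) c.
Proof. exact: (big_morph (fun a => lam L a c) (fun a b => lamDl a b c) (lam0l c)). Qed.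
Lemma lam_sumr I (r : seq I) (P : pred I) F c :
  lam L c (\sum_(i <- r | P i) F i) = \sum_(i <- r | P i) lam L c (F i).
Proof. exact: (big_morph (fun a => lam L c a) (fun a b => lamDr c a b) (lam0r c)). Qed.
Lemma lam_skew a b : L^T = - L -> lam L a b = - lam L b a.
Proof.
move=> HL; rewrite /lam.
transitivity (((a *m L *m b^T)^T) 0 0); first by rewrite [RHS]mxE.
by rewrite !trmx_mul trmxK HL mulNmx mulmxN mulmxA mxE.
Qed.
Lemma lam_diag a : L^T = - L -> lam L a a = 0.
Proof.
move=> HL; have := lam_skew a a HL; move/eqP; rewrite -addr_eq0 -mulr2n.
by rewrite mulrn_eq0 /= => /eqP.
Qed.
End Lam.

Section Supp.
Variable (m : nat) (L : 'M[int]_m).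
Local Notation K := (int * 'rV[int]_m)%type.
Local Notation T := (qtorus m).

Definition supp_in (P : K -> Prop) (x : T) := forall w, w \in msupp x -> P w.

Lemma supp_in0 P : supp_in P 0.
Proof. by move=> w; rewrite msupp0 in_fset0. Qed.
Lemma supp_inD P x y : supp_in P x -> supp_in P y -> supp_in P (x + y).
Proof.
move=> hx hy w /(fsubsetP (msuppD_le x y)); rewrite in_fsetU => /orP[]; auto.
Qed.
Lemma supp_inN P x : supp_in P x -> supp_in P (- x).
Proof. by move=> hx w; rewrite msuppN; auto. Qed.
Lemma supp_inU P (c : int) k : P k -> supp_in P << c *g k >>.
Proof. by move=> hk w /(fsubsetP msuppU_le); rewrite in_fset1 => /eqP ->. Qed.
Lemma supp_in_sum P I (r : seq I) (Q : pred I) (F : I -> T) :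
  (forall i, Q i -> supp_in P (F i)) -> supp_in P (\sum_(i <- r | Q i) F i).
Proof.
move=> H; apply: (big_ind (supp_in P)); [exact: supp_in0|exact: supp_inD|exact: H].
Qed.
Lemma supp_in_tmul (P Q R : K -> Prop) x y :
  supp_in P x -> supp_in Q y -> (forall u v, P u -> Q v -> R (pk L u v)) ->
  supp_in R (tmul L x y).
Proof.
move=> hx hy hR; rewrite /tmul big_seq; apply: supp_in_sum => u ux.
rewrite big_seq; apply: supp_in_sum => v vy; apply: supp_inU.
by apply: hR; [apply: hx|apply: hy].
Qed.
Lemma supp_in_imp (P Q : K -> Prop) x : (forall w, P w -> Q w) -> supp_in P x -> supp_in Q x.
Proof. by move=> H hx w /hx; apply: H. Qed.

Lemma sum_nonzero (I : eqType) (r : seq I) (F : I -> int) :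
  \sum_(i <- r) F i != 0 -> exists2 i, i \in r & F i != 0.
Proof.
elim: r => [|i r IH]; first by rewrite big_nil eqxx.
rewrite big_cons => H; have [Fi|Fi] := eqVneq (F i) 0.
  by move: H; rewrite Fi add0r => /IH [j jr Fj]; exists j; rewrite ?inE ?jr ?orbT.
by exists i; rewrite ?inE ?eqxx.
Qed.

Lemma msupp_tmul x y w : w \in msupp (tmul L x y) ->
  exists u v, [/\ u \in msupp x, v \in msupp y & w = pk L u v].
Proof.
rewrite -mcoeff_neq0 tmulE => /sum_nonzero [u ux] /sum_nonzero [v vy].
case: (eqVneq (pk L u v) w) => [<- _|_]; last by rewrite mulr0n eqxx.
by exists u, v.
Qed.
End Supp.

Section InL0.
Variable (m : nat) (L : 'M[int]_m) (n i j : nat).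
Local Notation K := (int * 'rV[int]_m)%type.
Local Notation T := (qtorus m).
Local Notation inL := (inL0 L n i j).

Definition offij (c : 'rV[int]_m) := forall k : 'I_m, val k = i \/ val k = j -> c 0 k = 0.
Definition offP (w : K) := offij w.2.

Lemma scE p : sc m p = \sum_(a <- msupp p) << p@_a *g (a, 0 : 'rV[int]_m) >>.
Proof. by []. Qed.

Lemma scU (c : int) (a : int) : sc m << c *g a >> = << c *g (a, 0 : 'rV[int]_m) >>.
Proof.
rewrite scE msuppU; have [->|c0] := eqVneq c 0; first by rewrite big_seq_fset0 monalgU0.
by rewrite big_seq_fset1 mcoeffUU.
Qed.

Lemma offD a b : offij a -> offij b -> offij (a + b).
Proof. by move=> ha hb k hk; rewrite mxE ha ?hb ?addr0. Qed.
Lemma offN a : offij a -> offij (- a).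
Proof. by move=> ha k hk; rewrite mxE ha ?oppr0. Qed.
Lemma off0 : offij 0.
Proof. by move=> k _; rewrite mxE. Qed.
Lemma off_ev (k : 'I_m) : val k != i -> val k != j -> offij (ev k).
Proof.
move=> hi hj k' hk'; rewrite /ev mxE /=; case: eqP => // e; subst k'.
by case: hk' => /eqP; rewrite ?(negPf hi) ?(negPf hj).
Qed.

Lemma inL0_supp z : (i < n)%N -> (j < n)%N -> inL z -> supp_in offP z.
Proof.
move=> ltin ltjn; elim=> {z}.
- move=> p; rewrite scE; apply: supp_in_sum => a _; apply: supp_inU; exact: off0.
- move=> k hk; apply: supp_inU; apply: off_ev; apply/eqP => e; have hk2 : (n <= val k)%N := hk; rewrite e in hk2; lia.
- move=> k hk; apply: supp_inU; apply: offN; apply: off_ev; apply/eqP => e; have hk2 : (n <= val k)%N := hk; rewrite e in hk2; lia.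
- by move=> k _ hi hj; apply: supp_inU; apply: off_ev.
- by move=> k _ hi hj; apply: supp_inU; apply: offN; apply: off_ev.
- by move=> x y _ hx _ hy; apply: supp_inD.
- by move=> x _ hx; apply: supp_inN.
- move=> x y _ hx _ hy; apply: (supp_in_tmul hx hy) => u v hu hv; exact: offD.
Qed.

Lemma inL0_0 : inL 0.
Proof. by have := inL0_sc L n i j 0; rewrite scE msupp0 big_seq_fset0. Qed.

Lemma tone_sc : tone m = sc m zq1.
Proof. by rewrite /zq1 scU. Qed.

Lemma inL0_tone : inL (tone m).
Proof. by rewrite tone_sc; apply: inL0_sc. Qed.

Lemma Xt_mul a b : tmul L (Xt a) (Xt b) = << 1 *g (lam L a b, a + b) >>.
Proof. by rewrite /Xt tmulUU mulr1 /pk /= add0r. Qed.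

Lemma scU_mul (c z : int) (w : K) :
  tmul L (sc m << c *g z >>) << 1 *g w >> = << c *g (z + w.1, w.2) >>.
Proof. by rewrite scU tmulUU mulr1 /pk /= lam0l addr0 add0r. Qed.

Lemma inL0_XtD a b : inL (Xt a) -> inL (Xt b) -> inL (Xt (a + b)).
Proof.
move=> ha hb.
have -> : Xt (a + b) = tmul L (sc m << 1 *g - lam L a b >>) (tmul L (Xt a) (Xt b)).
  by rewrite Xt_mul scU_mul /= addNr.
by apply: inL0_mul; [apply: inL0_sc|apply: inL0_mul].
Qed.

Lemma inL0_Xt0 : inL (Xt 0).
Proof. exact: inL0_tone. Qed.

Lemma inL0_XtMn c r : inL (Xt c) -> inL (Xt (c *+ r)).
Proof.
move=> hc; elim: r => [|r IH]; first by rewrite mulr0n; exact: inL0_Xt0.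
by rewrite mulrS; apply: inL0_XtD.
Qed.

Lemma inL0_Xt_ev (k : 'I_m) : val k != i -> val k != j -> inL (Xt (ev k)) /\ inL (Xt (- ev k)).
Proof.
move=> hi hj; case: (leqP n k) => hk.
  by split; [apply: inL0_frozen|apply: inL0_frozen_inv].
by split; [apply: inL0_mut|apply: inL0_mut_inv].
Qed.

Lemma inL0_Xt c : offij c -> inL (Xt c).
Proof.
move=> hc; rewrite [c]row_sum_delta.
apply: (big_ind (fun c => inL (Xt c))); [exact: inL0_Xt0|exact: inL0_XtD|].
move=> k _.
have [e|ne] := boolP ((val k == i) || (val k == j)).
  rewrite hc ?scale0r; first exact: inL0_Xt0.
  by case/orP: e => /eqP; auto.
move: ne; rewrite negb_or => /andP[hi hj].
have [h1 h2] := inL0_Xt_ev hi hj.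
rewrite -[c 0 k]intz scaler_int; case: (c 0 k) => r.
  have -> : ev k *~ Posz r = ev k *+ r by [].
  by apply: inL0_XtMn.
have -> : ev k *~ Negz r = (- ev k) *+ r.+1 by rewrite NegzE mulrNz -mulNrz.
by apply: inL0_XtMn.
Qed.

Lemma inL0_U (c : int) (w : K) : offP w -> inL << c *g w >>.
Proof.
case: w => a v hv.
have -> : << c *g (a, v) >> = tmul L (sc m << c *g a >>) (Xt v).
  by rewrite /Xt scU_mul /= addr0.
by apply: inL0_mul; [apply: inL0_sc|apply: inL0_Xt].
Qed.

Lemma supp_inL0 z : supp_in offP z -> inL z.
Proof.
move=> hz; rewrite (monalgE z) big_seq.
apply: (big_ind inL); [exact: inL0_0|exact: inL0_add|].
by move=> w /hz hw; apply: inL0_U.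
Qed.
End InL0.


Lemma tone_key m (c : int) (k : int * 'rV[int]_m) : c = 1 -> k = (0, 0) -> << c *g k >> = tone m.
Proof. by move=> -> ->. Qed.

Lemma tP m (x y : qtorus m) : (forall w : int * 'rV[int]_m, x@_w = y@_w) -> x = y.
Proof. by move/malgP. Qed.


Lemma tmulC_cond m (L : 'M[int]_m) x y :
  (forall u v, u \in msupp x -> v \in msupp y -> lam L u.2 v.2 = lam L v.2 u.2) ->
  tmul L x y = tmul L y x.
Proof.
move=> H; apply: tP => w.
rewrite [LHS]tmulE [RHS]tmulE.
rewrite exchange_big /=.

apply: eq_big_seq => v vy.
apply: eq_big_seq => u ux; rewrite mulrC /pk H //.
by rewrite (addrC u.1) (addrC u.2).
Qed.

Fixpoint lexlt (s t : seq int) : bool :=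
  match s, t with
  | x :: s', y :: t' => (x < y) || (x == y) && lexlt s' t'
  | _, _ => false
  end.
Fixpoint addl (s t : seq int) : seq int :=
  match s, t with
  | x :: s', y :: t' => (x + y) :: addl s' t'
  | _, _ => [::]
  end.

Lemma lexlt_irr s : lexlt s s = false.
Proof. by elim: s => //= x s ->; rewrite ltxx eqxx. Qed.

Lemma lexlt_trans s t u : lexlt s t -> lexlt t u -> lexlt s u.
Proof.
elim: s t u => [|x s IH] [|y t] [|z u] //=.
case/orP=> [lxy|/andP[/eqP <- st]]; case/orP=> [lyz|/andP[/eqP <- tu]].
- by rewrite (lt_trans lxy lyz).
- by rewrite lxy.
- by rewrite lyz.
- by rewrite eqxx (IH _ _ st tu) orbT.
Qed.

Lemma lexlt_total s t : size s = size t -> s = t \/ lexlt s t \/ lexlt t s.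
Proof.
elim: s t => [|x s IH] [|y t] //=; first by left.
move=> [/IH] h; case: (ltgtP x y) => hxy.
- by right; left.
- by right; right.
- by subst y; case: h => [->|[h|h]]; [left|right; left|right; right].
Qed.

Lemma lexlt_addr s t u : size s = size u -> size t = size u -> lexlt s t ->
  lexlt (addl s u) (addl t u).
Proof.
elim: s t u => [|x s IH] [|y t] [|z u] //= [hs] [ht].
case/orP=> [lxy|/andP[/eqP <- st]].
  by rewrite ltrD2r lxy.
by rewrite eqxx IH // orbT.
Qed.

Lemma addlC s t : addl s t = addl t s.
Proof. by elim: s t => [|x s IH] [|y t] //=; rewrite addrC IH. Qed.

Lemma size_addl s t : size s = size t -> size (addl s t) = size s.
Proof. by elim: s t => [|x s IH] [|y t] //= [/IH ->]. Qed.

Lemma addl_map (I : Type) (r : seq I) (f g : I -> int) :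
  addl (map f r) (map g r) = map (fun x => f x + g x) r.
Proof. by elim: r => //= x r ->. Qed.

Section Order.
Variable (m : nat) (L : 'M[int]_m) (psi : 'rV[int]_m -> int) (sg : int).
Hypothesis psiD : forall a b, psi (a + b) = psi a + psi b.
Hypothesis sg0 : sg != 0.
Local Notation K := (int * 'rV[int]_m)%type.
Local Notation T := (qtorus m).

Definition ent (c : 'rV[int]_m) := [seq c 0 k | k <- enum 'I_m].
Definition rkl c := psi c :: ent c.
Definition ltk (u v : K) :=
  lexlt (rkl u.2) (rkl v.2) || (u.2 == v.2) && (sg * u.1 < sg * v.1).

Lemma size_rkl c : size (rkl c) = m.+1.
Proof. by rewrite /= size_map size_enum_ord. Qed.

Lemma rklD a b : rkl (a + b) = addl (rkl a) (rkl b).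
Proof. by rewrite /rkl /= psiD /ent addl_map; congr (_ :: _); apply: eq_map => k; rewrite mxE. Qed.

Lemma rkl_inj a b : rkl a = rkl b -> a = b.
Proof.
case=> _ /eq_in_map H; apply/rowP => k; rewrite -!/(a 0 k).
by apply: H; rewrite mem_enum.
Qed.

Lemma ltk_irr u : ltk u u = false.
Proof. by rewrite /ltk lexlt_irr ltxx andbF. Qed.

Lemma ltk_trans u v w : ltk u v -> ltk v w -> ltk u w.
Proof.
rewrite /ltk; case/orP=> [h1|/andP[/eqP e1 l1]]; case/orP=> [h2|/andP[/eqP e2 l2]].
- by rewrite (lexlt_trans h1 h2).
- by rewrite -e2 h1.
- by rewrite e1 h2.
- by rewrite e1 e2 eqxx (lt_trans l1 l2) orbT.
Qed.

Lemma ltk_total u v : u = v \/ ltk u v \/ ltk v u.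
Proof.
case: u v => [a c] [b d]; rewrite /ltk [(a,c).2]/= [(b,d).2]/= [(a,c).1]/= [(b,d).1]/=.
have [/rkl_inj ->|[h|h]] := lexlt_total (etrans (size_rkl c) (esym (size_rkl d))).
- rewrite lexlt_irr eqxx /=; case: (ltgtP (sg * a) (sg * b)) => h; auto.
  by left; congr (_, _); apply: (mulfI sg0).
- by right; left; rewrite h.
- by right; right; rewrite h.
Qed.

Lemma ltk_pkl u u' v : ltk u u' -> ltk (pk L u v) (pk L u' v).
Proof.
rewrite /ltk /pk [(_, u.2 + v.2).2]/= [(_, u'.2 + v.2).2]/= [(_, u.2 + v.2).1]/= [(_, u'.2 + v.2).1]/=.
case/orP=> [h|/andP[/eqP e l]].
  by rewrite !rklD lexlt_addr ?size_rkl.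
by rewrite e eqxx lexlt_irr /= !mulrDr ltrD2r ltrD2r.
Qed.

Lemma ltk_pkr u v v' : ltk v v' -> ltk (pk L u v) (pk L u v').
Proof.
rewrite /ltk /pk [(_, u.2 + v.2).2]/= [(_, u.2 + v'.2).2]/= [(_, u.2 + v.2).1]/= [(_, u.2 + v'.2).1]/=.
case/orP=> [h|/andP[/eqP e l]].
  by rewrite !rklD (addlC (rkl u.2)) (addlC (rkl u.2)) lexlt_addr ?size_rkl.
by rewrite e eqxx lexlt_irr /= !mulrDr -!addrA ltrD2l ltrD2r.
Qed.

Lemma ltk_psi u v : ltk u v -> psi u.2 <= psi v.2.
Proof.
rewrite /ltk /rkl /=; case/orP=> [/orP[/ltW //|/andP[/eqP -> _] //]|/andP[/eqP -> _] //].
Qed.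

Lemma ltk_same u v : u.2 = v.2 -> ltk u v = (sg * u.1 < sg * v.1).
Proof. by move=> e; rewrite /ltk e lexlt_irr eqxx. Qed.

Definition IsTop (x : T) (t : K) :=
  x@_t != 0 /\ forall w, w \in msupp x -> w = t \/ ltk w t.

Lemma IsTop_uniq x t1 t2 : IsTop x t1 -> IsTop x t2 -> t1 = t2.
Proof.
move=> [h1 H1] [h2 H2]; move: h1 h2; rewrite !mcoeff_neq0 => h1 h2.
case: (H2 _ h1) => // l1; case: (H1 _ h2) => [->//|l2].
by have := ltk_trans l1 l2; rewrite ltk_irr.
Qed.

Lemma exists_max (s : seq K) : (exists w, w \in s) ->
  exists2 t, t \in s & forall w, w \in s -> w = t \/ ltk w t.
Proof.
elim: s => [[w]//|a s IH _]; have [->|ne] := eqVneq s [::].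
  by exists a; rewrite ?inE // => w; rewrite inE => /eqP; left.
have [t ts Ht] : exists2 t, t \in s & forall w, w \in s -> w = t \/ ltk w t.
  by apply: IH; case: s ne => // b s' _; exists b; rewrite inE eqxx.
have [e|[l|l]] := ltk_total a t.
- exists t; rewrite ?inE ?ts ?orbT // => w; rewrite inE => /orP[/eqP->|/Ht] //; by left.
- exists t; rewrite ?inE ?ts ?orbT // => w; rewrite inE => /orP[/eqP->|/Ht]; auto.
- exists a; rewrite ?inE ?eqxx // => w; rewrite inE => /orP[/eqP->|/Ht]; auto.
  by case=> [->|lw]; right => //; apply: ltk_trans lw l.
Qed.

Lemma msupp_nonempty (x : T) : x != 0 -> exists w, w \in msupp x.
Proof.
move=> x0; case: (msupp x =P fset0) => [e|ne].
  by move: x0; rewrite (monalgE x) e big_seq_fset0 eqxx.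
case: (fset_0Vmem (msupp x)) => [e|[w wx]]; first by case: ne.
by exists w.
Qed.

Lemma exists_top x : x != 0 -> exists t, IsTop x t.
Proof.
move=> /msupp_nonempty [w wx].
have [t tx Ht] := exists_max (s := msupp x) (ex_intro _ w wx); exists t; split; last by [].
by rewrite mcoeff_neq0.
Qed.

Lemma ltk_neq a b : ltk a b -> a != b.
Proof. by move=> l; apply/eqP => e; move: l; rewrite e ltk_irr. Qed.

Lemma top_pair x y tx ty u v : IsTop x tx -> IsTop y ty ->
  u \in msupp x -> v \in msupp y -> (u != tx) || (v != ty) ->
  ltk (pk L u v) (pk L tx ty).
Proof.
move=> [_ H1] [_ H2] ux vy; case: (H1 u ux) => [->|l]; case: (H2 v vy) => [->|l'].
- by rewrite !eqxx.
- by move=> _; apply: ltk_pkr.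
- by move=> _; apply: ltk_pkl.
- by move=> _; apply: ltk_trans (ltk_pkl _ l) (ltk_pkr _ l').
Qed.

Lemma top_tmul x y tx ty : IsTop x tx -> IsTop y ty ->
  (tmul L x y)@_(pk L tx ty) = x@_tx * y@_ty /\ IsTop (tmul L x y) (pk L tx ty).
Proof.
move=> Tx Ty; have cf : (tmul L x y)@_(pk L tx ty) = x@_tx * y@_ty.
  have txx : tx \in msupp x by rewrite -mcoeff_neq0; case: Tx.
  have tyy : ty \in msupp y by rewrite -mcoeff_neq0; case: Ty.
  rewrite tmulE (bigD1_seq tx) ?fset_uniq //= (bigD1_seq ty) ?fset_uniq //= eqxx mulr1n.
  have Z : forall u v, u \in msupp x -> v \in msupp y -> (u != tx) || (v != ty) ->
      (pk L u v == pk L tx ty) = false.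
    by move=> u v ux vy h; apply/negbTE/ltk_neq/(top_pair Tx Ty ux vy h).
  rewrite [X in _ + X + _]big_seq_cond [X in _ + X + _]big1 ?addr0; last first.
    by move=> v /andP[vy vne]; rewrite Z ?vne ?orbT.
  rewrite big_seq_cond big1 ?addr0 // => u /andP[ux une].
  by rewrite big_seq big1 // => v vy; rewrite Z ?une.
split => //; split.
  by rewrite cf mulf_neq0 //; [case: Tx|case: Ty].
move=> w /msupp_tmul [u [v [ux vy ->]]].
have [eu|nu] := eqVneq u tx; have [ev|nv] := eqVneq v ty.
- by left; rewrite eu ev.
- by right; apply: (top_pair Tx Ty ux vy); rewrite nv orbT.
- by right; apply: (top_pair Tx Ty ux vy); rewrite nu.
- by right; apply: (top_pair Tx Ty ux vy); rewrite nu.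
Qed.
End Order.



Lemma int_unit (x y : int) : x * y = 1 -> x = 1 \/ x = -1.
Proof.
move=> h.
have [hx|hx|hx] := ltgtP x 0; [right|left|]; try nia.
have [hy|hy|hy] := ltgtP y 0; nia.
have [hy|hy|hy] := ltgtP y 0; nia.
Qed.

Lemma sum_coef (K : choiceType) (g : {malg int[K]}) k :
  \sum_(u <- msupp g) g@_u *+ (u == k) = g@_k.
Proof.
rewrite [in RHS](monalgE g) raddf_sum; apply: eq_bigr => u _ /=.
by rewrite mcoeffU.
Qed.

Section Fac.
Variable (m : nat) (L : 'M[int]_m).
Local Notation K := (int * 'rV[int]_m)%type.
Local Notation T := (qtorus m).

Lemma tmul_suml I (r : seq I) (P : pred I) F h :
  tmul L (\sum_(i <- r | P i) F i) h = \sum_(i <- r | P i) tmul L (F i) h.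
Proof.
exact: (big_morph (fun x => tmul L x h) (fun a b => tmulDl L a b h) (tmul0g L h)).
Qed.

Lemma scX p c : tmul L (sc m p) (Xt c) = \sum_(a <- msupp p) << p@_a *g (a, c) >>.
Proof.
rewrite scE tmul_suml; apply: eq_bigr => a _.
by rewrite /Xt tmulUU mulr1 /pk /= lam0l !addr0 add0r.
Qed.

Lemma scX_coef p c (w : K) : (tmul L (sc m p) (Xt c))@_w = p@_(w.1) *+ (w.2 == c).
Proof.
rewrite scX raddf_sum; case: w => [b c'] /=.
have [->|ne] := eqVneq c' c.
  rewrite mulr1n -sum_coef; apply: eq_bigr => a _ /=.
  by rewrite mcoeffU xpair_eqE eqxx andbT.
rewrite mulr0n big1 // => a _ /=.
by rewrite mcoeffU xpair_eqE (eq_sym c) (negPf ne) andbF.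
Qed.

Lemma Fac_coef (p : nat -> ZQ) s f (w : K) :
  (\sum_(0 <= r < s.+1) tmul L (sc m (p r)) (Xt (f *+ r)))@_w =
  \sum_(0 <= r < s.+1) (p r)@_(w.1) *+ (w.2 == f *+ r).
Proof. by rewrite raddf_sum; apply: eq_bigr => r _ /=; rewrite scX_coef. Qed.

Definition mulfv (f : 'rV[int]_m) (w : K) := exists r : nat, w.2 = f *+ r.

Lemma Fac_supp (p : nat -> ZQ) s f :
  supp_in (mulfv f) (\sum_(0 <= r < s.+1) tmul L (sc m (p r)) (Xt (f *+ r))).
Proof.
move=> w; rewrite -mcoeff_neq0 Fac_coef => /sum_nonzero [r _].
by case: (eqVneq w.2 (f *+ r)) => [e _|_] /=; [exists r|].
Qed.

Lemma prod_supp (P : nat -> nat -> ZQ) (S : nat -> nat) (idx : seq nat) f :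
  supp_in (mulfv f) (\big[tmul L/tone m]_(l <- idx)
     (\sum_(0 <= r < (S l).+1) tmul L (sc m (P l r)) (Xt (f *+ r)))).
Proof.
elim: idx => [|l idx IH].
  by rewrite big_nil; apply: supp_inU; exists 0%N; rewrite mulr0n.
rewrite big_cons; apply: (supp_in_tmul (P := mulfv f) (Q := mulfv f)); [exact: Fac_supp|exact: IH|].
by move=> u v [r1 e1] [r2 e2]; exists (r1 + r2)%N; rewrite /pk /= e1 e2 mulrnDr.
Qed.

Section Ord.
Variable (psi : 'rV[int]_m -> int) (sg : int).
Hypothesis psiD : forall a b, psi (a + b) = psi a + psi b.
Hypothesis sg0 : sg != 0.
Hypothesis HL : L^T = - L.

Lemma psi0 : psi 0 = 0.
Proof. by have := psiD 0 0; rewrite addr0 => h; lia. Qed.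
Lemma psiMn a r : psi (a *+ r) = psi a *+ r.
Proof. by elim: r => [|r IH]; rewrite ?mulr0n ?psi0 // !mulrS psiD IH. Qed.

Lemma ltk_psi_lt (u v : K) : psi u.2 < psi v.2 -> ltk psi sg u v.
Proof. by move=> h; rewrite /ltk /rkl /= h. Qed.

Lemma Fac_top (p : nat -> ZQ) s f : p s = zq1 -> 0 < psi f ->
  let F := \sum_(0 <= r < s.+1) tmul L (sc m (p r)) (Xt (f *+ r)) in
  IsTop psi sg F (0, f *+ s) /\ F@_(0, f *+ s) = 1.
Proof.
move=> ps pf F.
have ne : forall r, (r < s)%N -> (f *+ s == f *+ r) = false.
  move=> r rs; apply/negbTE/eqP => e; have := congr1 psi e; rewrite !psiMn => e2.
  have : psi f *+ r < psi f *+ s by nia.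
  by rewrite e2 ltxx.
have cf : F@_(0, f *+ s) = 1.
  rewrite /F Fac_coef big_nat_recr //= big_nat big1 ?add0r => [|r /andP[_ rs]].
    by rewrite eqxx mulr1n ps /zq1 mcoeffU eqxx.
  by rewrite ne // mulr0n.
split => //; split; first by rewrite cf.
move=> w; rewrite -mcoeff_neq0 /F Fac_coef => /sum_nonzero [r].
rewrite mem_index_iota => /andP[_]; rewrite ltnS leq_eqVlt => /orP[/eqP ->|rs].
  rewrite ps /zq1 mcoeffU !mulrb.
  case: (eqVneq (0:int) w.1) => [e1|_]; last by case: ifP => _; rewrite eqxx.
  case: (eqVneq w.2 (f *+ s)) => [e2 _|_]; last by rewrite eqxx.
  by left; case: w e1 e2 => a c /= <- ->.
rewrite mulrb; case: (eqVneq w.2 (f *+ r)) => [e _|_]; last by rewrite eqxx.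
by right; apply: ltk_psi_lt; rewrite e /= !psiMn; nia.
Qed.

Lemma tone_top : IsTop psi sg (tone m) (0, 0) /\ (tone m)@_(0, 0) = 1.
Proof.
have cf : (tone m)@_(0, 0) = 1 by rewrite /tone mcoeffUU.
split => //; split; first by rewrite cf.
by move=> w /(fsubsetP msuppU_le); rewrite in_fset1 => /eqP ->; left.
Qed.

Lemma prod_top (P : nat -> nat -> ZQ) (S : nat -> nat) (idx : seq nat) f :
  0 < psi f -> (forall l, l \in idx -> P l (S l) = zq1) ->
  let V := \big[tmul L/tone m]_(l <- idx)
     (\sum_(0 <= r < (S l).+1) tmul L (sc m (P l r)) (Xt (f *+ r))) in
  exists R : nat, IsTop psi sg V (0, f *+ R) /\ V@_(0, f *+ R) = 1.
Proof.
move=> pf; elim: idx => [|l idx IH] H V.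
  by exists 0%N; rewrite /V big_nil mulr0n; exact: tone_top.
have [R [TR cR]] := IH (fun l' h => H l' (@mem_behead _ (l :: idx) _ h)).
have [TF cF] := Fac_top (H l (mem_head _ _)) pf.
have [c1 T1] := top_tmul L psiD TF TR.
have e : pk L (0, f *+ S l) (0, f *+ R) = (0, f *+ (S l + R)).
  by rewrite /pk /= lamMnl lamMnr lam_diag // !mul0rn !addr0 mulrnDr.
exists (S l + R)%N; rewrite /V big_cons -e; split => //.
by rewrite c1 cF cR mulr1.
Qed.
End Ord.
End Fac.



Section Main.
Variable (m : nat) (L : 'M[int]_m).
Hypothesis HL : L^T = - L.
Local Notation K := (int * 'rV[int]_m)%type.
Local Notation T := (qtorus m).

Lemma top_le psi sg (x : T) t w : IsTop psi sg x t -> w \in msupp x -> psi w.2 <= psi t.2.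
Proof. by move=> [_ H] /H [->|/ltk_psi]. Qed.

Lemma top_in psi sg (x : T) t : IsTop psi sg x t -> t \in msupp x.
Proof. by move=> [h _]; rewrite -mcoeff_neq0. Qed.

Lemma tmul_neq0 (d a : T) : tmul L d a != 0 -> d != 0 /\ a != 0.
Proof.
move=> h; split; apply/eqP => e; move: h; rewrite e ?tmul0g ?tmulg0 eqxx //.
Qed.

Lemma psi_const (psi : 'rV[int]_m -> int) (d a : T) :
  (forall x y, psi (x + y) = psi x + psi y) ->
  tmul L d a != 0 -> supp_in (fun w => psi w.2 = 0) (tmul L d a) ->
  forall w, w \in msupp d -> forall w', w' \in msupp d -> psi w.2 = psi w'.2.
Proof.
move=> psiD V0 HV; have [d0 a0] := tmul_neq0 V0.
pose npsi c := - psi c.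
have npsiD : forall x y, npsi (x + y) = npsi x + npsi y by move=> x y; rewrite /npsi psiD opprD.
have s1 : (1 : int) != 0 by [].
have [md Td] := exists_top psi s1 d0; have [ma Ta] := exists_top psi s1 a0.
have [nd Tnd] := exists_top npsi s1 d0; have [na Tna] := exists_top npsi s1 a0.
have [_ T1] := top_tmul L psiD Td Ta; have [_ T2] := top_tmul L npsiD Tnd Tna.
have h2 : psi (md.2 + ma.2) = 0 := HV _ (top_in T1).
have h1 : psi (nd.2 + na.2) = 0 := HV _ (top_in T2).
rewrite !psiD in h1 h2.
have hma : psi na.2 <= psi ma.2 := top_le Ta (top_in Tna).
have hmd : npsi md.2 <= npsi nd.2 := top_le Tnd (top_in Td).
suff H : forall w, w \in msupp d -> psi w.2 = psi md.2.
  by move=> w wd w' w'd; rewrite !H.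
move=> w wd.
have q1 : psi w.2 <= psi md.2 := top_le Td wd.
have q2 : npsi w.2 <= npsi nd.2 := top_le Tnd wd.
rewrite /npsi in q2 hmd; lia.
Qed.

Lemma row_nz (h : 'rV[int]_m) : h != 0 -> exists k, h 0 k != 0.
Proof.
move=> hn; case: (boolP [forall k, h 0 k == 0]) => [/forallP H|/forallPn [k hk]].
  have e : h = 0 by apply/rowP => k; rewrite (eqP (H k)) mxE.
  by move: hn; rewrite e eqxx.
by exists k.
Qed.

Lemma vec_indep (f g dl : 'rV[int]_m) :
  (forall a b : int, a *: f + b *: g = 0 -> a = 0 /\ b = 0) ->
  (forall k l : 'I_m, f 0 k * dl 0 l = f 0 l * dl 0 k) ->
  (forall k l : 'I_m, g 0 k * dl 0 l = g 0 l * dl 0 k) -> dl = 0.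
Proof.
move=> ind Hf Hg.
have f0 : f != 0.
  by apply/eqP => e; have := ind 1 0; rewrite e scaler0 scale0r addr0 => /(_ erefl) [].
have g0 : g != 0.
  by apply/eqP => e; have := ind 0 1; rewrite e scaler0 scale0r addr0 => /(_ erefl) [].
case: (row_nz f0) => k fk; case: (row_nz g0) => l gl.
have E : (g 0 l * dl 0 k) *: f + (- (f 0 k * dl 0 l)) *: g = 0.
  apply/rowP => p; rewrite !mxE.
  have h1 : f 0 k * dl 0 p = f 0 p * dl 0 k := Hf k p.
  have h2 : g 0 l * dl 0 p = g 0 p * dl 0 l := Hg l p.
  transitivity (g 0 l * (f 0 p * dl 0 k) - f 0 k * dl 0 l * g 0 p); first by ring.
  rewrite -h1.
  transitivity (f 0 k * (g 0 l * dl 0 p) - f 0 k * dl 0 l * g 0 p); first by ring.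
  rewrite h2; ring.
case: (ind _ _ E) => /eqP e1 /eqP e2.
move: e1 e2; rewrite oppr_eq0 !mulf_eq0 (negPf fk) (negPf gl) /= => /eqP dk /eqP dl_.
apply/rowP => p; rewrite mxE; apply/eqP.
have h1 : f 0 k * dl 0 p = f 0 p * dl 0 k := Hf k p.
move: h1; rewrite dk mulr0 => /eqP; rewrite mulf_eq0 (negPf fk) /=; by [].
Qed.

Lemma lam_off (i j : nat) x c :
  (forall k : 'I_m, val k != i -> val k != j -> lam L x (ev k) = 0) ->
  offij i j c -> lam L x c = 0.
Proof.
move=> H hc; rewrite [c]row_sum_delta lam_sumr big1 // => k _; rewrite lamZr.
have [e|ne] := boolP ((val k == i) || (val k == j)).
  by rewrite hc ?mul0r //; case/orP: e => /eqP; auto.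
by move: ne; rewrite negb_or => /andP[hi hj]; rewrite -/(ev k) H ?mulr0.
Qed.

Lemma sub4 (a b c d : int) : a - b = c - d -> a - c = b - d.
Proof. lia. Qed.

Lemma ltk_diff psi sg (u v : K) : ltk psi sg u v -> u.2 != v.2 -> lexlt (rkl psi u.2) (rkl psi v.2).
Proof. by rewrite /ltk => /orP[//|/andP[/eqP e _]]; rewrite e eqxx. Qed.

Lemma top_fst psi sg (x : T) t w : IsTop psi sg x t -> w \in msupp x -> w.2 = t.2 ->
  sg * w.1 <= sg * t.1.
Proof. by move=> [_ H] /H [->//|l] e; move: l; rewrite ltk_same // => /ltW. Qed.

Lemma coprime_main (n i j : nat) (f1 f2 : 'rV[int]_m) (V1 V2 : T) :
  (i < n)%N -> (j < n)%N ->
  (forall a b : int, a *: f1 + b *: f2 = 0 -> a = 0 /\ b = 0) ->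
  supp_in (mulfv f1) V1 -> supp_in (mulfv f2) V2 ->
  V1 != 0 -> V2 != 0 ->
  (forall psi sg, (forall x y, psi (x + y) = psi x + psi y) -> sg != 0 -> 0 < psi f1 ->
      exists R : nat, IsTop psi sg V1 (0, f1 *+ R) /\ V1@_(0, f1 *+ R) = 1) ->
  coprime_in_center L n i j V1 V2.
Proof.
move=> lin ljn ind S1 S2 V10 V20 Top d Cd [a [Ca e1]] [b [Cb e2]].
pose mn (f : 'rV[int]_m) (k l : 'I_m) (c : 'rV[int]_m) := f 0 k * c 0 l - f 0 l * c 0 k.
have mnD : forall f k l x y, mn f k l (x + y) = mn f k l x + mn f k l y.
  by move=> f k l x y; rewrite /mn !mxE; ring.
have mnf : forall f k l r, mn f k l (f *+ r) = 0.
  move=> f k l; elim=> [|r IH]; first by rewrite /mn mulr0n !mxE; ring.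
  by rewrite mulrS mnD IH addr0 /mn; ring.
have V1' : tmul L d a != 0 by rewrite -e1.
have V2' : tmul L d b != 0 by rewrite -e2.
have same : forall w w', w \in msupp d -> w' \in msupp d -> w.2 = w'.2.
  move=> w w' hw hw'; apply/eqP; rewrite -subr_eq0; apply/eqP.
  apply: (vec_indep ind) => k l.
    have S1' : supp_in (fun w => mn f1 k l w.2 = 0) (tmul L d a).
      by rewrite -e1; apply: (supp_in_imp _ S1) => u [r ->]; apply: mnf.
    have h : mn f1 k l w.2 = mn f1 k l w'.2 := psi_const (mnD f1 k l) V1' S1' hw hw'.
    move: h; rewrite /mn !mxE => h; rewrite !mulrBr; exact: sub4 h.
  have S2' : supp_in (fun w => mn f2 k l w.2 = 0) (tmul L d b).
    by rewrite -e2; apply: (supp_in_imp _ S2) => u [r ->]; apply: mnf.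
  have h : mn f2 k l w.2 = mn f2 k l w'.2 := psi_const (mnD f2 k l) V2' S2' hw hw'.
  move: h; rewrite /mn !mxE => h; rewrite !mulrBr; exact: sub4 h.
have [d0 a0] := tmul_neq0 V1'.
pose psi0 (c : 'rV[int]_m) := \sum_(k < m) f1 0 k * c 0 k.
have psiD : forall x y, psi0 (x + y) = psi0 x + psi0 y.
  by move=> x y; rewrite /psi0 -big_split; apply: eq_bigr => k _; rewrite mxE mulrDr.
have f10 : f1 != 0.
  by apply/eqP => e; have := ind 1 0; rewrite e scaler0 scale0r addr0 => /(_ erefl) [].
have pos : 0 < psi0 f1.
  have [k fk] := row_nz f10.
  rewrite /psi0 (bigD1 k) //=; apply: ltr_pwDl.
    by rewrite -expr2 lt0r sqr_ge0 andbT expf_neq0.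
  by apply: sumr_ge0 => k' _; rewrite -expr2 sqr_ge0.
have s1 : (1 : int) != 0 by [].
have sm : (-1 : int) != 0 by [].
have [Rp [TVp cVp]] := Top psi0 1 psiD s1 pos.
have [Rm [TVm cVm]] := Top psi0 (-1) psiD sm pos.
have [dp Tdp] := exists_top psi0 s1 d0; have [ap Tap] := exists_top psi0 s1 a0.
have [dm Tdm] := exists_top psi0 sm d0; have [am Tam] := exists_top psi0 sm a0.
have [cp Tp] := top_tmul L psiD Tdp Tap; have [cm Tm] := top_tmul L psiD Tdm Tam.
rewrite e1 in TVp TVm cVp cVm.
have Ep := IsTop_uniq Tp TVp; have Em := IsTop_uniq Tm TVm.
have eap : ap.2 = am.2.
  apply/eqP; apply/negPn/negP => ne.
  case: (Tap.2 am (top_in Tam)) => [e|l1]; first by move: ne; rewrite e eqxx.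
  case: (Tam.2 ap (top_in Tap)) => [e|l2]; first by move: ne; rewrite e eqxx.
  have ne' : am.2 != ap.2 by rewrite eq_sym.
  have := lexlt_trans (ltk_diff l1 ne') (ltk_diff l2 ne).
  by rewrite lexlt_irr.
have edp : dp.2 = dm.2 := same _ _ (top_in Tdp) (top_in Tdm).
have h1 : dp.1 + ap.1 + lam L dp.2 ap.2 = 0 by have := congr1 fst Ep.
have h2 : dm.1 + am.1 + lam L dm.2 am.2 = 0 by have := congr1 fst Em.
rewrite edp eap in h1.
have hw1 : forall w, w \in msupp d -> w.1 <= dp.1.
  move=> w wd; have := top_fst Tdp wd (same _ _ wd (top_in Tdp)).
  by rewrite !mul1r.
have hw2 : forall w, w \in msupp d -> dm.1 <= w.1.
  move=> w wd; have := top_fst Tdm wd (same _ _ wd (top_in Tdm)).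
  by rewrite !mulN1r lerN2.
have ha : am.1 <= ap.1.
  by have := top_fst Tap (top_in Tam) (esym eap); rewrite !mul1r.
have hdm : dm.1 <= dp.1 := hw2 _ (top_in Tdp).
have onept : forall w, w \in msupp d -> w = dp.
  move=> w wd; have q1 := hw1 _ wd; have q2 := hw2 _ wd.
  have q3 : w.1 = dp.1 by lia.
  by case: w wd q1 q2 q3 (same _ _ wd (top_in Tdp)) => w1 w2 /= _ _ _ -> ->; case: dp {Ep Tp cp Tdp hw1 hdm h1 edp} .
have dE : d = << d@_dp *g dp >>.
  rewrite [LHS](@monalgEw _ _ d [fset dp]%fset) ?big_seq_fset1 //.
  by apply/fsubsetP => w /onept ->; rewrite in_fset1.
move: dE cp; move gE : (d@_dp) => g dE cp.
have gu : g * g = 1.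
  have := cp; rewrite Ep cVp => /esym /int_unit [->|->] //.
have g0 : g != 0 by apply/eqP => e; move: gu; rewrite e mul0r.
have offd : offij i j dp.2 := inL0_supp lin ljn Cd.1 (top_in Tdp).
have lamv : forall k : 'I_m, val k != i -> val k != j -> lam L dp.2 (ev k) = 0.
  move=> k hi hj; have [hX _] := inL0_Xt_ev L n hi hj.
  pose w0 := pk L dp (0, ev k).
  have E0 := congr1 (mcoeff w0) (Cd.2 _ hX).
  have cL : (tmul L d (Xt (ev k)))@_w0 = g.
    by rewrite dE /Xt tmulUU mcoeffU eqxx mulr1 mulr1n.
  have cR : (tmul L (Xt (ev k)) d)@_w0 = g *+ (pk L (0, ev k) dp == w0).
    by rewrite dE /Xt tmulUU mcoeffU mul1r.
  have := etrans (esym cL) (etrans E0 cR); rewrite /w0.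
  case: (eqVneq (pk L (0, ev k) dp) (pk L dp (0, ev k))) => [e _|_]; last first.
    by rewrite mulr0n => /eqP; rewrite (negPf g0).
  have := congr1 fst e; rewrite /= (lam_skew _ _ HL) => ee2.
  have e3 : lam L dp.2 (ev k) = - lam L dp.2 (ev k) by lia.
  lia.
have lam0 : forall c, offij i j c -> lam L dp.2 c = 0.
  by move=> c hc; apply: (lam_off lamv hc).
exists << g *g (- dp.1, - dp.2) >>; split; [split|].
- apply: supp_inL0; apply: supp_inU; exact: offN.
- move=> y Cy; apply: tmulC_cond => u w /(fsubsetP msuppU_le); rewrite in_fset1 => /eqP -> wy.
  have hw : offij i j w.2 := inL0_supp lin ljn Cy wy.
  by rewrite /= lamNl lamNr (lam_skew w.2 _ HL) lam0 // oppr0.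
- rewrite dE tmulUU; apply: tone_key; first exact: gu.
  rewrite /pk /=; apply/eqP; rewrite xpair_eqE; apply/andP; split; apply/eqP.
  + by rewrite lamNr (lam_diag _ HL) oppr0 addr0 subrr.
  + exact: subrr.
Qed.
End Main.



Lemma mxMnE m (f : 'rV[int]_m) r k : (f *+ r) 0 k = f 0 k *+ r.
Proof. by elim: r => [|r IH]; rewrite ?mulr0n ?mxE // !mulrS mxE IH. Qed.

Lemma central_of m (L : 'M[int]_m) (HL : L^T = - L) (n i j : nat) (f : 'rV[int]_m) (V : qtorus m) :
  (i < n)%N -> (j < n)%N ->
  offij i j f ->
  (forall k : 'I_m, val k != i -> val k != j -> lam L f (ev k) = 0) ->
  supp_in (mulfv f) V -> inCenterL0 L n i j V.
Proof.
move=> lin ljn hf hl SV; split.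
  apply: supp_inL0; apply: (supp_in_imp _ SV) => w [r e].
  by rewrite /offP e => k hk; rewrite mxMnE hf // mul0rn.
move=> y Cy; apply: tmulC_cond => u w /SV [r e] wy.
have hw : offij i j w.2 := inL0_supp lin ljn Cy wy.
have h0 : lam L f w.2 = 0 := lam_off hl hw.
by rewrite e (lam_skew w.2 _ HL) lamMnl h0 mul0rn oppr0.
Qed.

Lemma pos_psi m (f : 'rV[int]_m) : f != 0 -> 0 < \sum_(k < m) f 0 k * f 0 k.
Proof.
move=> f10; have [k fk] := row_nz f10.
rewrite (bigD1 k) //=; apply: ltr_pwDl.
  by rewrite -expr2 lt0r sqr_ge0 andbT expf_neq0.
by apply: sumr_ge0 => k' _; rewrite -expr2 sqr_ge0.
Qed.

Lemma psiD_lin m (f : 'rV[int]_m) : forall x y : 'rV[int]_m,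
  \sum_(k < m) f 0 k * (x + y) 0 k = \sum_(k < m) f 0 k * x 0 k + \sum_(k < m) f 0 k * y 0 k.
Proof. by move=> x y; rewrite -big_split; apply: eq_bigr => k _; rewrite mxE mulrDr. Qed.

Lemma V_nonzero m (L : 'M[int]_m) (HL : L^T = - L) (P : nat -> nat -> ZQ) (S : nat -> nat) N f :
  f != 0 -> (forall l, (l < N)%N -> P l (S l) = zq1) ->
  \big[tmul L/tone m]_(0 <= l < N)
     (\sum_(0 <= r < (S l).+1) tmul L (sc m (P l r)) (Xt (f *+ r))) != 0.
Proof.
move=> f0 H; have s1 : (1 : int) != 0 by [].
have H' : forall l, l \in index_iota 0 N -> P l (S l) = zq1.
  by move=> l; rewrite mem_index_iota => /andP[_ /H].
have [R [_ c]] := prod_top (psiD_lin f) s1 HL (pos_psi f0) H'.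
by apply/eqP => e; move: c; rewrite e mcoeff0.
Qed.

Unset Implicit Arguments.
Set Strict Implicit.

Theorem lemma3p2 (m n : nat) (L : 'M[int]_m) (B : 'M[int]_(m, n))
  (d : 'I_n -> nat) (h : 'I_n -> seq ZQ)
  (i j : 'I_n) (f1 f2 : 'rV[int]_m)
  (N N1 : nat) (s t : nat -> nat) (xi zeta : nat -> nat -> ZQ) :
  seed_data L B d h ->
  i != j ->
  (forall k : 'I_m, val k = val i \/ val k = val j -> f1 0 k = 0 /\ f2 0 k = 0) ->
  (forall k : 'I_m, val k != val i -> val k != val j ->
     lam L f1 (ev k) = 0 /\ lam L f2 (ev k) = 0) ->
  (0 < N)%N -> (0 < N1)%N ->
  (forall l, (l < N)%N -> xi l (s l) = zq1) ->
  (forall l, (l < N1)%N -> zeta l (t l) = zq1) ->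
  (forall a b : int, a *: f1 + b *: f2 = 0 -> a = 0 /\ b = 0) ->
  let V1 := \big[tmul L / tone m]_(0 <= l < N)
              (\sum_(0 <= r < (s l).+1) tmul L (sc m (xi l r)) (Xt (f1 *+ r))) in
  let V2 := \big[tmul L / tone m]_(0 <= l < N1)
              (\sum_(0 <= r < (t l).+1) tmul L (sc m (zeta l r)) (Xt (f2 *+ r))) in
  inCenterL0 L n i j V1 /\ inCenterL0 L n i j V2 /\
  coprime_in_center L n i j V1 V2.
Proof.
move=> [_ [_ [[HL _] _]]] _ hf hl _ _ hxi hzeta ind V1 V2.
have lin : (i < n)%N := ltn_ord i.
have ljn : (j < n)%N := ltn_ord j.
have of1 : offij i j f1 by move=> k hk; case: (hf k hk).
have of2 : offij i j f2 by move=> k hk; case: (hf k hk).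
have l1 : forall k : 'I_m, val k != i -> val k != j -> lam L f1 (ev k) = 0.
  by move=> k hi hj; case: (hl k hi hj).
have l2 : forall k : 'I_m, val k != i -> val k != j -> lam L f2 (ev k) = 0.
  by move=> k hi hj; case: (hl k hi hj).
have S1 : supp_in (mulfv f1) V1 by move=> w; apply: prod_supp.
have S2 : supp_in (mulfv f2) V2 by move=> w; apply: prod_supp.
have f10 : f1 != 0.
  by apply/eqP => e; have := ind 1 0; rewrite e scaler0 scale0r addr0 => /(_ erefl) [].
have f20 : f2 != 0.
  by apply/eqP => e; have := ind 0 1; rewrite e scaler0 scale0r add0r => /(_ erefl) [].
split; first exact: (@central_of m L HL n i j f1 V1 lin ljn of1 l1 S1).
split; first exact: (@central_of m L HL n i j f2 V2 lin ljn of2 l2 S2).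
apply: (coprime_main HL lin ljn ind S1 S2).
- exact: V_nonzero.
- exact: V_nonzero.
- move=> psi sg psiD sg0 pos.
  have H' : forall l, l \in index_iota 0 N -> xi l (s l) = zq1.
    by move=> l; rewrite mem_index_iota => /andP[_ /hxi].
  exact: (prod_top psiD sg0 HL pos H').
Qed.
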